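(* Let $n\ge 7$ and let $CU_n$ be the set of chemical unicyclic graphs on $n$ vertices. Define the following subsets of $CU_n$ (in each, all $m_{i,j}$ not listed are $0$): $\alpha_1$: $n_2=n$ and $m_{2,2}=n$; $\alpha_2$: $n_4=0,n_3=1,n_2=n-2,n_1=1$, $m_{1,3}=1$, $m_{2,3}=2$, $m_{2,2}=n-3$; $\alpha_3$: $n_4=0,n_3=1,n_2=n-2,n_1=1$, $m_{1,2}=1$, $m_{2,3}=3$, $m_{2,2}=n-4$; $\alpha_9$: $n_4=0,n_3=2,n_2=n-4,n_1=2$, $m_{1,2}=2$, $m_{2,3}=4$, $m_{3,3}=1$, $m_{2,2}=n-7$. Let $G_1\in\alpha_1$, $G_2\in\alpha_3$, $G_3\in\alpha_2$, $G_4\in\alpha_9$, and let $G\in CU_n$ not belong to $\alpha_1\cup\alpha_2\cup\alpha_3\cup\alpha_9$. Then $SO_{red}(G_1)<SO_{red}(G_2)<SO_{red}(G_3)<SO_{red}(G_4)<SO_{red}(G)$.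
   Context: All graphs are simple and connected. A chemical graph is a graph with maximum degree at most $4$; a unicyclic graph is a connected graph with $n$ vertices and $n$ edges. $d_G(u)$ is the degree of $u$, $n_i$ the number of vertices of degree $i$, and $m_{i,j}$ the number of edges joining a vertex of degree $i$ to a vertex of degree $j$. The reduced Sombor index is $SO_{red}(G)=\sum_{uv\in E(G)}\sqrt{(d_G(u)-1)^2+(d_G(v)-1)^2}$. *)

(* Defs.v *)
From mathcomp Require Import all_boot all_order all_algebra.
Set Implicit Arguments. Unset Strict Implicit. Unset Printing Implicit Defensive.
Import Order.TTheory GRing.Theory Num.Theory.

Section Graphs.
Variable n : nat.
Implicit Types (e : rel 'I_n).

Definition simple_graph e := symmetric e /\ irreflexive e.

Definition connected_graph e := forall u v : 'I_n, connect e u v.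

Definition deg e (v : 'I_n) : nat := #|[set u | e v u]|.

Definition edge_set e : {set 'I_n * 'I_n} :=
  [set p | e p.1 p.2 && (p.1 < p.2)%N].

Definition num_edges e : nat := #|edge_set e|.

Definition chemical e := forall v, (deg e v <= 4)%N.

Definition unicyclic e := connected_graph e /\ num_edges e = n.

Definition CU e := [/\ simple_graph e, chemical e & unicyclic e].

Definition nv e (i : nat) : nat := #|[set v | deg e v == i]|.

Definition me e (i j : nat) : nat :=
  #|[set p in edge_set e |
      ((deg e p.1 == i) && (deg e p.2 == j)) ||
      ((deg e p.1 == j) && (deg e p.2 == i))]|.

Definition SO_red (R : rcfType) e : R :=
  \sum_(p in edge_set e)
     Num.sqrt ((((deg e p.1)%:R - 1) ^+ 2 + ((deg e p.2)%:R - 1) ^+ 2)%R).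

(* "all m_{i,j} (1 <= i <= j <= 4) equal the listed values, unlisted ones are 0" *)
Definition m_profile e (f : nat -> nat -> nat) :=
  forall i j, (1 <= i)%N -> (i <= j)%N -> (j <= 4)%N -> me e i j = f i j.

Definition alpha1 e :=
  nv e 2 = n /\
  m_profile e (fun i j => if (i, j) == (2, 2) then n else 0%N).

Definition alpha2 e :=
  [/\ nv e 4 = 0%N, nv e 3 = 1%N, nv e 2 = (n - 2)%N, nv e 1 = 1%N &
  m_profile e (fun i j =>
    if (i, j) == (1, 3) then 1%N
    else if (i, j) == (2, 3) then 2%N
    else if (i, j) == (2, 2) then (n - 3)%N else 0%N)].

Definition alpha3 e :=
  [/\ nv e 4 = 0%N, nv e 3 = 1%N, nv e 2 = (n - 2)%N, nv e 1 = 1%N &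
  m_profile e (fun i j =>
    if (i, j) == (1, 2) then 1%N
    else if (i, j) == (2, 3) then 3%N
    else if (i, j) == (2, 2) then (n - 4)%N else 0%N)].

Definition alpha9 e :=
  [/\ nv e 4 = 0%N, nv e 3 = 2%N, nv e 2 = (n - 4)%N, nv e 1 = 2%N &
  m_profile e (fun i j =>
    if (i, j) == (1, 2) then 2%N
    else if (i, j) == (2, 3) then 4%N
    else if (i, j) == (3, 3) then 1%N
    else if (i, j) == (2, 2) then (n - 7)%N else 0%N)].

End Graphs.

(* Main.v *)
Require Import Defs.
From mathcomp Require Import all_boot all_order all_algebra.
From mathcomp Require Import zify ring lra.
Import Order.TTheory GRing.Theory Num.Theory.
Module MA.
Set Implicit Arguments. Unset Strict Implicit. Unset Printing Implicit Defensive.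

Section G.
Variable n : nat.
Variable e : rel 'I_n.

Lemma card_sum (P : pred 'I_n) : #|[set v | P v]| = \sum_v (P v : nat).
Proof.
rewrite -sum1_card big_mkcond /=; apply: eq_bigr => v _.
by rewrite inE; case: (P v).
Qed.

Lemma handshake (h : 'I_n -> nat) : simple_graph e ->
  \sum_v h v * deg e v = \sum_(p in edge_set e) (h p.1 + h p.2).
Proof.
case=> sym irr.
have E1 : forall v, h v * deg e v = \sum_(u | e v u) h v.
  by move=> v; rewrite /deg -sum1_card big_distrr /= muln1; apply: eq_bigl => u; rewrite inE.
rewrite (eq_bigr _ (fun v _ => E1 v)) pair_big_dep /=.
rewrite (bigID (fun p : 'I_n * 'I_n => p.1 < p.2)%N) /=.
rewrite big_split /=; congr (_ + _).
  by apply: eq_bigl => p; rewrite inE.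
rewrite (reindex_inj (h := fun p : 'I_n * 'I_n => (p.2, p.1))); last first.
  by case=> a b [c d] /= [-> ->].
apply: eq_bigl => [[a b]] /=; rewrite inE /= sym.
case: (boolP (e a b)) => //= Hab; rewrite -leqNgt leq_eqVlt.
case: eqP => // Eab; exfalso; move: Hab; rewrite (val_inj Eab) irr.
done.
Qed.

End G.

End MA.
Import MA.

Module MB.
Set Implicit Arguments. Unset Strict Implicit. Unset Printing Implicit Defensive.
Local Open Scope ring_scope.

Section G.
Variable n : nat.
Variable e : rel 'I_n.

Definition Pm (i j : nat) (p : 'I_n * 'I_n) :=
  ((deg e p.1 == i) && (deg e p.2 == j)) || ((deg e p.1 == j) && (deg e p.2 == i)).

Lemma me_sum (R : pzSemiRingType) i j (c : R) :
  (me e i j)%:R * c = \sum_(p in edge_set e) (if Pm i j p then c else 0).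
Proof.
rewrite -big_mkcondr /= sumr_const mulr_natl /me; congr (_ *+ _).
by apply: eq_card => p; rewrite !inE /Pm unfold_in /= inE.
Qed.

Definition psum (R : pzSemiRingType) (g : nat -> nat -> R) :=
 (me e 1 1)%:R * g 1%N 1%N + (me e 1 2)%:R * g 1%N 2%N + (me e 1 3)%:R * g 1%N 3%N
 + (me e 1 4)%:R * g 1%N 4%N + (me e 2 2)%:R * g 2%N 2%N + (me e 2 3)%:R * g 2%N 3%N
 + (me e 2 4)%:R * g 2%N 4%N + (me e 3 3)%:R * g 3%N 3%N + (me e 3 4)%:R * g 3%N 4%N
 + (me e 4 4)%:R * g 4%N 4%N.

Lemma key (R : pzSemiRingType) (g : nat -> nat -> R) :
  (forall a b, g a b = g b a) ->
  (forall v, (1 <= deg e v <= 4)%N) ->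
  \sum_(p in edge_set e) g (deg e p.1) (deg e p.2) = psum g.
Proof.
move=> gs Hd; rewrite /psum !me_sum -!big_split /=; apply: eq_bigr => p _.
rewrite /Pm; move: (Hd p.1) (Hd p.2).
move: (deg e p.1) (deg e p.2) => a b.
move=> Ha Hb.
case: a Ha => [|[|[|[|[|a]]]]] Ha; try (exfalso; lia);
case: b Hb => [|[|[|[|[|b]]]]] Hb; try (exfalso; lia); rewrite /= ?addr0 ?add0r //; by rewrite gs.
Qed.

End G.

End MB.
Import MB.

Module MC.
Set Implicit Arguments. Unset Strict Implicit. Unset Printing Implicit Defensive.

Section G.
Variable n : nat.
Variable e : rel 'I_n.

Lemma deg_ge1 : connected_graph e -> (1 < n)%N -> forall v, (1 <= deg e v)%N.
Proof.
move=> Hc Hn v.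
have [u Huv] : exists u : 'I_n, u != v.
  have h0 : (0 < n)%N by lia.
  case: (eqVneq v (Ordinal h0)) => [->|H]; first by exists (Ordinal Hn).
  by exists (Ordinal h0); rewrite eq_sym.
case/connectP: (Hc v u) => [[|w p]] /=; first by move=> _ E; rewrite E eqxx in Huv.
case/andP => Hw _ _; apply/card_gt0P; exists w; by rewrite inE.
Qed.

Lemma nbr_deg1 v w x : symmetric e -> deg e v = 1%N -> e v w -> e v x -> x = w.
Proof.
move=> sym /eqP/cards1P [y Hy] Hw Hx.
have : w \in [set u | e v u] by rewrite inE.
have : x \in [set u | e v u] by rewrite inE.
by rewrite Hy !inE => /eqP -> /eqP ->.
Qed.

Lemma m11_0 : CU e -> (2 < n)%N -> me e 1 1 = 0%N.
Proof.
case=> [[sym irr] _ [Hc _]] Hn; apply/eqP; rewrite cards_eq0; apply/eqP/setP => [[a b]].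
rewrite !inE /= orbb; apply/negP => /andP [/andP [Hab _] /andP [Ha Hb]].
have [w Hw] : exists w : 'I_n, (w != a) && (w != b).
  case: (pickP (fun w : 'I_n => (w != a) && (w != b))) => [w Hw|H]; first by exists w.
  exfalso; have : (n <= #|[set a; b]|)%N.
    rewrite -{1}(card_ord n) -cardsT subset_leq_card //; apply/subsetP => w _.
    by move: (H w); rewrite !inE => /negbT; rewrite negb_and !negbK.
  by rewrite cards2; case: (a != b) => /=; lia.
have Hcl : closed e (mem [set a; b]).
  move=> x y Hxy; rewrite !inE.
  case: (boolP ((x == a) || (x == b))) => [/orP [/eqP Ex|/eqP Ex]|Hx].
  - subst x; have -> : y = b by apply: (nbr_deg1 sym (eqP Ha) Hab Hxy).
    by rewrite eqxx orbT.
  - subst x; have -> : y = a by apply: (nbr_deg1 sym (eqP Hb) _ Hxy); rewrite sym.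
    by rewrite eqxx.
  - apply/esym/negbTE; apply/negP => /orP [/eqP Ey|/eqP Ey]; subst y.
    + have Ex : x = b by apply: (nbr_deg1 sym (eqP Ha) Hab); rewrite sym.
      by move: Hx; rewrite Ex eqxx orbT.
    + have Hba : e b a by rewrite sym.
      have Ex : x = a by apply: (nbr_deg1 sym (eqP Hb) Hba); rewrite sym.
      by move: Hx; rewrite Ex eqxx.
have := closed_connect Hcl (Hc a w).
by rewrite !inE eqxx /=; move/esym; case/andP: Hw => /negbTE -> /negbTE ->.
Qed.

End G.

End MC.
Import MC.

Module MD.
Set Implicit Arguments. Unset Strict Implicit. Unset Printing Implicit Defensive.

Section G.
Variable n : nat.
Variable e : rel 'I_n.

Lemma m33_le1 : nv e 3 = 2%N -> (me e 3 3 <= 1)%N.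
Proof.
move=> /eqP /cards2P [x [y [Hxy HS]]].
have mem3 : forall v, deg e v = 3%N -> (v == x) || (v == y).
  move=> v Hv; have : v \in [set v | deg e v == 3] by rewrite inE Hv.
  by rewrite HS !inE.
apply/card_le1_eqP => [[a b] [c d]]; rewrite !inE /= !orbb.
move=> /andP [/andP [_ Hab] /andP [/eqP Ha /eqP Hb]].
move=> /andP [/andP [_ Hcd] /andP [/eqP Hc /eqP Hd]].
move: (mem3 _ Ha) (mem3 _ Hb) (mem3 _ Hc) (mem3 _ Hd) Hab Hcd.
by do 4 (case/orP => /eqP ->); rewrite ?ltnn //; move=> H1 H2; lia.
Qed.

End G.

Section F.
Variable n : nat.
Variable e : rel 'I_n.
Hypothesis HCU : CU e.
Hypothesis Hn : (2 < n)%N.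

Lemma degs : forall v, (1 <= deg e v <= 4)%N.
Proof.
case: HCU => _ Hch [Hc _] v; rewrite Hch andbT; apply: deg_ge1 => //; lia.
Qed.

Lemma degeq k : (k * nv e k = psum e (fun a b => ((a == k) : nat) + (b == k)))%N.
Proof.
have Hs : simple_graph e by case: HCU.
transitivity (\sum_(p in edge_set e) (((deg e p.1 == k) : nat) + (deg e p.2 == k)))%N;
  last first.
  rewrite -(key (R := nat)); last 2 first.
  - by move=> a b; rewrite addnC.
  - exact: degs.
  by [].
rewrite -(handshake (fun v => ((deg e v == k) : nat))) // /nv (MA.card_sum (fun v => deg e v == k)) big_distrr /=; apply: eq_bigr => v _.
by case: eqP => [->|]; rewrite ?muln0 ?mul0n ?muln1 ?mul1n // mulnC.
Qed.

Lemma edgeq : (psum e (fun _ _ => 1) = n)%N.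
Proof.
rewrite -(key (R := nat)) //; last exact: degs.
case: HCU => _ _ [_ Hne]; rewrite -[RHS]Hne /num_edges -sum1_card; by [].
Qed.

Lemma parteq : (nv e 1 + nv e 2 + nv e 3 + nv e 4 = n)%N.
Proof.
rewrite /nv !MA.card_sum -!big_split /=.
rewrite -[RHS](card_ord n) -sum1_card; apply: eq_bigr => v _.
by move: (degs v); case: (deg e v) => [|[|[|[|[|k]]]]].
Qed.

Lemma allfacts :
  ((nv e 1 + nv e 2 + nv e 3 + nv e 4 = n)%N /\
      (nv e 1 = me e 1 2 + me e 1 3 + me e 1 4)%N /\
      (2 * nv e 2 = me e 1 2 + 2 * me e 2 2 + me e 2 3 + me e 2 4)%N /\
      (3 * nv e 3 = me e 1 3 + me e 2 3 + 2 * me e 3 3 + me e 3 4)%N /\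
      (4 * nv e 4 = me e 1 4 + me e 2 4 + me e 3 4 + 2 * me e 4 4)%N /\
      (me e 1 1 = 0 /\ me e 1 2 + me e 1 3 + me e 1 4 + me e 2 2 + me e 2 3 + me e 2 4
        + me e 3 3 + me e 3 4 + me e 4 4 = n)%N).
Proof.
have h11 := m11_0 HCU Hn.
have d1 := degeq 1; have d2 := degeq 2; have d3 := degeq 3; have d4 := degeq 4.
have ed := edgeq.
rewrite /psum /= !natn in d1 d2 d3 d4 ed.
split; first exact: parteq.
repeat split; lia.
Qed.

End F.

Lemma m33_0 n (e : rel 'I_n) : (nv e 3 <= 1)%N -> me e 3 3 = 0%N.
Proof.
move=> H; apply/eqP; rewrite cards_eq0; apply/eqP/setP => [[a b]].
rewrite !inE /= orbb; apply/negP => /andP [/andP [_ Hab] /andP [Ha Hb]].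
have h2 : #|[set a; b]| = 2%N.
  rewrite cards2; case: eqP => // E; move: Hab; rewrite E ltnn //.
have : (#|[set a; b]| <= nv e 3)%N.
  apply: subset_leq_card; apply/subsetP => x; rewrite !inE => /orP [] /eqP -> //.
lia.
Qed.

End MD.
Import MD.

Module ME.
Set Implicit Arguments. Unset Strict Implicit. Unset Printing Implicit Defensive.
Local Open Scope ring_scope.

Definition F (R : rcfType) (i j : nat) : R :=
  Num.sqrt ((i%:R - 1) ^+ 2 + (j%:R - 1) ^+ 2).

Lemma Fb (R : rcfType) i j (c lo hi : R) :
  (i%:R - 1) ^+ 2 + (j%:R - 1) ^+ 2 = c -> 0 <= lo -> lo ^+ 2 <= c -> c <= hi ^+ 2 -> 0 <= hi ->
  lo <= F R i j /\ F R i j <= hi.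
Proof.
move=> Hc Hlo H1 H2 Hhi; rewrite /F Hc.
have c0 : 0 <= c by apply: le_trans H1; apply: sqr_ge0.
have s0 := sqrtr_ge0 c; have s2 := sqr_sqrtr c0.
move: (Num.sqrt c) s0 s2 => s s0 s2; clear Hc.
split.
  by rewrite leNgt; apply/negP => Hs; move: H1; rewrite -s2 leNgt; apply/negP/negPn;
    rewrite !expr2; apply: ltr_pM.
by rewrite leNgt; apply/negP => Hs; move: H2; rewrite -s2 leNgt; apply/negP/negPn;
    rewrite !expr2; apply: ltr_pM.
Qed.


Ltac fb i j c lo hi := 
  let H := fresh "B" in
  have H : (lo <= F _ i j /\ F _ i j <= hi);
  [ apply: (@Fb _ i j c); [ring | lra | lra | lra | lra] | ].

Section Ar.
Variable R : rcfType.


Lemma e11 : F R 1 1 = 0.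
Proof. fb 1%N 1%N (0:R) (0:R) (0:R). by case: B => ? ?; apply/le_anti/andP; split. Qed.
Lemma e12 : F R 1 2 = 1.
Proof. fb 1%N 2%N (1:R) (1:R) (1:R). by case: B => ? ?; apply/le_anti/andP; split. Qed.
Lemma e13 : F R 1 3 = 2.
Proof. fb 1%N 3%N (4:R) (2:R) (2:R). by case: B => ? ?; apply/le_anti/andP; split. Qed.
Lemma e14 : F R 1 4 = 3.
Proof. fb 1%N 4%N (9:R) (3:R) (3:R). by case: B => ? ?; apply/le_anti/andP; split. Qed.
Lemma e22 : 1414/1000 <= F R 2 2 /\ F R 2 2 <= 1415/1000.
Proof. by fb 2%N 2%N (2:R) (1414/1000:R) (1415/1000:R). Qed.
Lemma e23 : 2236/1000 <= F R 2 3 /\ F R 2 3 <= 2237/1000.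
Proof. by fb 2%N 3%N (5:R) (2236/1000:R) (2237/1000:R). Qed.
Lemma e24 : 3162/1000 <= F R 2 4 /\ F R 2 4 <= 3163/1000.
Proof. by fb 2%N 4%N (10:R) (3162/1000:R) (3163/1000:R). Qed.
Lemma e33 : 2828/1000 <= F R 3 3 /\ F R 3 3 <= 2829/1000.
Proof. by fb 3%N 3%N (8:R) (2828/1000:R) (2829/1000:R). Qed.
Lemma e34 : 3605/1000 <= F R 3 4 /\ F R 3 4 <= 3606/1000.
Proof. by fb 3%N 4%N (13:R) (3605/1000:R) (3606/1000:R). Qed.
Lemma e44 : 4242/1000 <= F R 4 4 /\ F R 4 4 <= 4243/1000.
Proof. by fb 4%N 4%N (18:R) (4242/1000:R) (4243/1000:R). Qed.

Lemma bounds :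
  [/\ F R 1 1 = 0, F R 1 2 = 1, F R 1 3 = 2 & F R 1 4 = 3] /\
  (1414/1000 <= F R 2 2 /\ F R 2 2 <= 1415/1000) /\
  (2236/1000 <= F R 2 3 /\ F R 2 3 <= 2237/1000) /\
  (3162/1000 <= F R 2 4 /\ F R 2 4 <= 3163/1000) /\
  (2828/1000 <= F R 3 3 /\ F R 3 3 <= 2829/1000) /\
  (3605/1000 <= F R 3 4 /\ F R 3 4 <= 3606/1000) /\
  (4242/1000 <= F R 4 4 /\ F R 4 4 <= 4243/1000).
Proof.
split; first by split; [exact: e11|exact: e12|exact: e13|exact: e14].
split; first exact: e22. split; first exact: e23. split; first exact: e24.
split; first exact: e33. split; first exact: e34. exact: e44.
Qed.

End Ar.

End ME.
Import ME.

Module MG.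
Set Implicit Arguments. Unset Strict Implicit. Unset Printing Implicit Defensive.
Local Open Scope ring_scope.

Section Ar.
Variable R : rcfType.
Local Notation F := (F R).

Definition S10 (m11 m12 m13 m14 m22 m23 m24 m33 m34 m44 : nat) : R :=
 m11%:R * F 1%N 1%N + m12%:R * F 1%N 2%N + m13%:R * F 1%N 3%N
 + m14%:R * F 1%N 4%N + m22%:R * F 2%N 2%N + m23%:R * F 2%N 3%N
 + m24%:R * F 2%N 4%N + m33%:R * F 3%N 3%N + m34%:R * F 3%N 4%N
 + m44%:R * F 4%N 4%N.

Lemma natR (a b : nat) : a = b -> (a%:R : R) = b%:R.
Proof. by move=> ->. Qed.

Lemma prodlb (m : nat) (x lo : R) : lo <= x -> m%:R * lo <= m%:R * x.
Proof. by move=> H; apply: ler_wpM2l. Qed.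

Lemma sc (m : nat) (x c : R) : c <= 1000 * x -> c * m%:R <= 1000 * (m%:R * x).
Proof.
move=> H; rewrite mulrA (mulrC 1000) -mulrA mulrC; exact: ler_wpM2l.
Qed.

Lemma c12 : -415 <= 1000 * (1 - F 2 2) :> R. Proof. have [? ?] := e22 R. lra. Qed.
Lemma c13 : 585 <= 1000 * (2 - F 2 2) :> R. Proof. have [? ?] := e22 R. lra. Qed.
Lemma c14 : 1585 <= 1000 * (3 - F 2 2) :> R. Proof. have [? ?] := e22 R. lra. Qed.
Lemma c23 : 821 <= 1000 * (F 2 3 - F 2 2) :> R.
Proof. have [? ?] := e22 R; have [? ?] := e23 R. lra. Qed.
Lemma c24 : 1747 <= 1000 * (F 2 4 - F 2 2) :> R.
Proof. have [? ?] := e22 R; have [? ?] := e24 R. lra. Qed.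
Lemma c33 : 1413 <= 1000 * (F 3 3 - F 2 2) :> R.
Proof. have [? ?] := e22 R; have [? ?] := e33 R. lra. Qed.
Lemma c34 : 2190 <= 1000 * (F 3 4 - F 2 2) :> R.
Proof. have [? ?] := e22 R; have [? ?] := e34 R. lra. Qed.
Lemma c44 : 2827 <= 1000 * (F 4 4 - F 2 2) :> R.
Proof. have [? ?] := e22 R; have [? ?] := e44 R. lra. Qed.
Lemma cK : 1000 * (2 * (1 - F 2 2) + 4 * (F 2 3 - F 2 2) + (F 3 3 - F 2 2)) <= 3879 :> R.
Proof. have [? ?] := e22 R; have [? ?] := e23 R; have [? ?] := e33 R. lra. Qed.

Lemma sum8 (a1 a2 a3 a4 a5 a6 a7 a8 b1 b2 b3 b4 b5 b6 b7 b8 : R) :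
 a1 <= b1 -> a2 <= b2 -> a3 <= b3 -> a4 <= b4 -> a5 <= b5 -> a6 <= b6 -> a7 <= b7 -> a8 <= b8 ->
 a1 + a2 + a3 + a4 + a5 + a6 + a7 + a8 <= b1 + b2 + b3 + b4 + b5 + b6 + b7 + b8.
Proof. by move=> *; rewrite !lerD. Qed.

Lemma le_eqs (a b a' b' : R) : a <= b -> a' = a -> b' = b -> a' <= b'.
Proof. by move=> H -> ->. Qed.

Lemma fin (A B K S : R) :
  A - B <= 1000 * S -> 1000 * K <= 3879 -> B + 3879 < A -> 0 < S - K.
Proof. move=> *. lra. Qed.

Lemma arith (n m12 m13 m14 m22 m23 m24 m33 m34 m44 N1 N2 N3 N4 : nat) :
  (7 <= n)%N ->
  (N1 + N2 + N3 + N4 = n)%N ->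
  (N1 = m12 + m13 + m14)%N ->
  (2 * N2 = m12 + 2 * m22 + m23 + m24)%N ->
  (3 * N3 = m13 + m23 + 2 * m33 + m34)%N ->
  (4 * N4 = m14 + m24 + m34 + 2 * m44)%N ->
  (m12 + m13 + m14 + m22 + m23 + m24 + m33 + m34 + m44 = n)%N ->
  ((1 <= N4)%N \/ (3 <= N3)%N \/
   (N4 = 0%N /\ N3 = 2%N /\ (m33 = 0%N \/ (m33 = 1%N /\ (m12 <= 1)%N)))) ->
  S10 0 2 0 0 (n - 7) 4 0 1 0 0 < S10 0 m12 m13 m14 m22 m23 m24 m33 m34 m44.
Proof.
move=> Hn P D1 D2 D3 D4 Ed Hc.
have Hnat : (415 * m12 + 3879 < 585 * m13 + 1585 * m14 + 821 * m23 + 1747 * m24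
   + 1413 * m33 + 2190 * m34 + 2827 * m44)%N by lia.
have Hm22 : (m22%:R : R) = n%:R - (m12 + m13 + m14 + m23 + m24 + m33 + m34 + m44)%:R.
  have Hm22' : m22 = (n - (m12 + m13 + m14 + m23 + m24 + m33 + m34 + m44))%N by lia.
  have Hle : (m12 + m13 + m14 + m23 + m24 + m33 + m34 + m44 <= n)%N by lia.
  by rewrite Hm22' natrB.
rewrite /S10 natrB // Hm22 (e11 R) (e12 R) (e13 R) (e14 R) !natrD.
rewrite -subr_gt0.
rewrite [X in 0 < X](_ : _ = (m12%:R * (1 - F 2 2) + m13%:R * (2 - F 2 2)
   + m14%:R * (3 - F 2 2) + m23%:R * (F 2 3 - F 2 2) + m24%:R * (F 2 4 - F 2 2)
   + m33%:R * (F 3 3 - F 2 2) + m34%:R * (F 3 4 - F 2 2) + m44%:R * (F 4 4 - F 2 2))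
   - (2 * (1 - F 2 2) + 4 * (F 2 3 - F 2 2) + (F 3 3 - F 2 2))); last by ring.
apply: (fin (A := 585 * m13%:R + 1585 * m14%:R + 821 * m23%:R + 1747 * m24%:R
   + 1413 * m33%:R + 2190 * m34%:R + 2827 * m44%:R) (B := 415 * m12%:R)); last 2 first.
- exact: cK.
- by rewrite -!natrM -!natrD ltr_nat.
apply: (le_eqs (sum8 (sc m12 c12) (sc m13 c13) (sc m14 c14) (sc m23 c23) (sc m24 c24)
   (sc m33 c33) (sc m34 c34) (sc m44 c44))); ring.
Qed.

End Ar.

End MG.
Import MG.

Module MH.
Set Implicit Arguments. Unset Strict Implicit. Unset Printing Implicit Defensive.
Local Open Scope ring_scope.

Section M.
Variable R : rcfType.

Lemma SO_psum n (e : rel 'I_n) : CU e -> (2 < n)%N ->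
  SO_red R e = S10 R (me e 1 1) (me e 1 2) (me e 1 3) (me e 1 4) (me e 2 2)
     (me e 2 3) (me e 2 4) (me e 3 3) (me e 3 4) (me e 4 4).
Proof.
move=> HC Hn.
have -> : SO_red R e = psum e (F R).
  rewrite -key //; last exact: degs.
  by move=> a b; rewrite /F addrC.
by [].
Qed.

Lemma prof n (e : rel 'I_n) f : m_profile e f ->
  (me e 1 1 = f 1 1 /\ me e 1 2 = f 1 2 /\ me e 1 3 = f 1 3 /\ me e 1 4 = f 1 4 /\
      me e 2 2 = f 2 2 /\ me e 2 3 = f 2 3 /\ me e 2 4 = f 2 4 /\ me e 3 3 = f 3 3 /\
      me e 3 4 = f 3 4 /\ me e 4 4 = f 4 4)%N.
Proof. by move=> H; repeat split; apply: H. Qed.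

Lemma cmp12 n : (7 <= n)%N ->
  S10 R 0 0 0 0 n 0 0 0 0 0 < S10 R 0 1 0 0 (n - 4) 3 0 0 0 0.
Proof.
move=> Hn; rewrite /S10 natrB; last by lia.
rewrite (e11 R) (e12 R) (e13 R) (e14 R) -subr_gt0.
rewrite [X in 0 < X](_ : _ = 1 + 3 * F R 2 3 - 4 * F R 2 2); last by ring.
have [? ?] := e22 R; have [? ?] := e23 R. lra.
Qed.

Lemma cmp23 n : (7 <= n)%N ->
  S10 R 0 1 0 0 (n - 4) 3 0 0 0 0 < S10 R 0 0 1 0 (n - 3) 2 0 0 0 0.
Proof.
move=> Hn; rewrite /S10 !natrB; try lia.
rewrite (e11 R) (e12 R) (e13 R) (e14 R) -subr_gt0.
rewrite [X in 0 < X](_ : _ = 1 - F R 2 3 + F R 2 2); last by ring.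
have [? ?] := e22 R; have [? ?] := e23 R. lra.
Qed.

Lemma cmp34 n : (7 <= n)%N ->
  S10 R 0 0 1 0 (n - 3) 2 0 0 0 0 < S10 R 0 2 0 0 (n - 7) 4 0 1 0 0.
Proof.
move=> Hn; rewrite /S10 !natrB; try lia.
rewrite (e11 R) (e12 R) (e13 R) (e14 R) -subr_gt0.
rewrite [X in 0 < X](_ : _ = 2 * F R 2 3 + F R 3 3 - 4 * F R 2 2); last by ring.
have [? ?] := e22 R; have [? ?] := e23 R; have [? ?] := e33 R. lra.
Qed.

End M.

End MH.
Import MH.

Unset Implicit Arguments.
Local Open Scope ring_scope.

Ltac prof_tac := rewrite /m_profile;
  move=> [|[|[|[|[|?]]]]] [|[|[|[|[|?]]]]] ? ? ?; try (exfalso; lia); rewrite /=; lia.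

Theorem theorem3p7 (R : rcfType) (n : nat) (Hn : (7 <= n)%N)
  (G1 G2 G3 G4 G : rel 'I_n) :
  CU G1 -> alpha1 G1 ->
  CU G2 -> alpha3 G2 ->
  CU G3 -> alpha2 G3 ->
  CU G4 -> alpha9 G4 ->
  CU G -> ~ alpha1 G -> ~ alpha2 G -> ~ alpha3 G -> ~ alpha9 G ->
  SO_red R G1 < SO_red R G2 /\ SO_red R G2 < SO_red R G3 /\
  SO_red R G3 < SO_red R G4 /\ SO_red R G4 < SO_red R G.
Proof.
move=> C1 [_ P1] C2 [_ _ _ _ P2] C3 [_ _ _ _ P3] C4 [_ _ _ _ P4] C nA1 nA2 nA3 nA9.
have Hn2 : (2 < n)%N by lia.
rewrite (SO_psum R C1 Hn2) (SO_psum R C2 Hn2) (SO_psum R C3 Hn2) (SO_psum R C4 Hn2)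
  (SO_psum R C Hn2).
case: (prof P1) => -> [-> [-> [-> [-> [-> [-> [-> [-> ->]]]]]]]].
case: (prof P2) => -> [-> [-> [-> [-> [-> [-> [-> [-> ->]]]]]]]].
case: (prof P3) => -> [-> [-> [-> [-> [-> [-> [-> [-> ->]]]]]]]].
case: (prof P4) => -> [-> [-> [-> [-> [-> [-> [-> [-> ->]]]]]]]].
rewrite /=.
split; first exact: cmp12.
split; first exact: cmp23.
split; first exact: cmp34.
have [Pt [E1 [E2 [E3 [E4 [h11 Ed]]]]]] := allfacts C Hn2.
rewrite h11.
have hN1 : nv G 1 = (nv G 3 + 2 * nv G 4)%N by lia.
apply: (arith R Hn Pt E1 E2 E3 E4 Ed).
case: (leqP 1 (nv G 4)) => h4; first by left.
case: (leqP 3 (nv G 3)) => h3; first by right; left.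
have h40 : nv G 4 = 0%N by lia.
right; right; split => //.
case: (ltngtP (nv G 3) 2) => h3'.
- exfalso.
  case: (ltngtP (nv G 3) 1) => h3''.
  + apply: nA1; split; first by lia.
    prof_tac.
  + lia.
  + have h330 : me G 3 3 = 0%N by apply: m33_0; lia.
    case: (ltngtP (me G 1 3) 1) => h13.
    * apply: nA3; split; try lia. prof_tac.
    * lia.
    * apply: nA2; split; try lia. prof_tac.
- lia.
- split => //.
  have h33 := m33_le1 h3'.
  case: (ltngtP (me G 3 3) 1) => h33'; first by left; lia.
  + lia.
  + case: (ltngtP (me G 1 2) 2) => h12; first by right; split => //; lia.
    * lia.
    * exfalso; apply: nA9; split; try lia. prof_tac.
Qed.
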